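(* Consider the following kinetic transport model. Let $\{Z_k\}_{k\ge1}$ be a Markov chain on the two states $\{\mathrm{F},\mathrm{A}\}$ with initial distribution $\lambda=(\lambda_{\mathrm F},\lambda_{\mathrm A})$ and transition matrix $$\begin{pmatrix}1-a & a\\ b & 1-b\end{pmatrix}$$ (rows and columns indexed by $\mathrm F,\mathrm A$), $a,b\in[0,1]$. Let $K_n=\sum_{k=1}^n \mathbf 1_{\{Z_k=\mathrm F\}}$. Independently of $\{Z_k\}$, let $(X_k,Y_k)_{k\ge1}$ be i.i.d. with $$P((X_k,Y_k)=(1,j))=\alpha,\qquad P((X_k,Y_k)=(-1,j))=\beta\qquad (j=\pm1),$$ where $\alpha,\beta\ge0$, $\alpha+\beta=1/2$. Let $\tilde S(n)=(\tilde S_X(n),\tilde S_Y(n))=\sum_{k=1}^{K_n}(X_k+1,Y_k)$ and $n\ge1$. Then the conditional variance $\operatorname{Var}(\tilde S_Y(n)\mid \tilde S_X(n)=2x)$ is an increasing (non-decreasing) function of $x\in\{0,1,\dots,n\}$.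
   Context: Conditional variances are considered for conditioning events of positive probability. *)

(* Defs.v *)
(* The kinetic transport model run for n steps, realised on
   the finite sample space of all trajectories of (Z_k, X_k, Y_k), k = 1..n,
   with its exact joint law (Markov chain Z independent of the i.i.d. pairs). *)
From HB Require Import structures.
From mathcomp Require Import all_boot all_order all_algebra.
Set Implicit Arguments. Unset Strict Implicit. Unset Printing Implicit Defensive.
Import Order.TTheory GRing.Theory Num.Theory.
Local Open Scope ring_scope.

Section Model.
Variables (R : realFieldType) (n : nat).
(* Markov-chain parameters: states F = true, A = false. *)
Variables (lamF lamA a b : R).
Variables (alpha beta : R).

(* A sample point: (z, xs, ys); index i : 'I_n stands for time k = i+1.
   z i = true  <-> Z_{i+1} = F;  xs i = true <-> X_{i+1} = 1 (else -1);
   ys i = true <-> Y_{i+1} = 1 (else -1). *)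
Definition traj := {ffun 'I_n -> bool}.
Definition omega := (traj * traj * traj)%type.

Definition at_time (z : traj) (k : nat) : bool :=
  if @insub nat (fun k => k < n)%N _ k is Some i then z i else false.

Definition init_law (s : bool) : R := if s then lamF else lamA.

Definition trans (s t : bool) : R :=
  match s, t with
  | true, true => 1 - a | true, false => a
  | false, true => b | false, false => 1 - b
  end.

Definition chain_weight (z : traj) : R :=
  init_law (at_time z 0) *
  \prod_(0 <= k < n.-1) trans (at_time z k) (at_time z k.+1).

Definition step_weight (x y : bool) : R := if x then alpha else beta.

Definition weight (w : omega) : R :=
  let: (z, xs, ys) := w in
  chain_weight z * \prod_(i < n) step_weight (xs i) (ys i).

Definition sgn (s : bool) : R := if s then 1 else -1.

Definition Kn (w : omega) : nat := let: (z, _, _) := w in (\sum_(i < n) z i)%N.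

Definition SX (w : omega) : R :=
  let: (z, xs, ys) := w in \sum_(i < n | (i < Kn w)%N) (sgn (xs i) + 1).

Definition SY (w : omega) : R :=
  let: (z, xs, ys) := w in \sum_(i < n | (i < Kn w)%N) sgn (ys i).

Definition Prob (A : pred omega) : R := \sum_(w | A w) weight w.

Definition condE (f : omega -> R) (A : pred omega) : R :=
  (\sum_(w | A w) weight w * f w) / Prob A.

Definition condVar (f : omega -> R) (A : pred omega) : R :=
  condE (fun w => (f w - condE f A) ^+ 2) A.

Definition SX_event (x : nat) : pred omega := fun w => SX w == 2 * x%:R.

End Model.

(* Main.v *)
Require Import Defs.
From HB Require Import structures.
From mathcomp Require Import all_boot all_order all_algebra.
From mathcomp Require Import ring lra zify.
Import Order.TTheory GRing.Theory Num.Theory.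
Set Implicit Arguments. Unset Strict Implicit. Unset Printing Implicit Defensive.
Local Open Scope ring_scope.

Lemma binTP2 k l x y : (x <= y)%N -> (y <= k)%N -> (k <= l)%N ->
  ('C(l,x)*'C(k,y) <= 'C(k,x)*'C(l,y))%N.
Proof.
move=> xy yk; elim: l => [|l IH].
  by rewrite leqn0 => /eqP ->.
rewrite leq_eqVlt => /orP [/eqP <- //| kl].
have {}IH := IH kl.
have yl : (y <= l)%N by apply: leq_trans yk kl.
have xl : (x <= l)%N by apply: leq_trans xy yl.
have u0 : (0 < (l.+1 - x) * (l.+1 - y))%N by rewrite muln_gt0 !subn_gt0 !ltnS xl yl.
rewrite -(leq_pmul2r u0).
have eF := mul_bin_down l.+1 x. have eE := mul_bin_down l.+1 y. rewrite /= in eF eE.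
have -> : ('C(l.+1, x) * 'C(k, y) * ((l.+1 - x) * (l.+1 - y)) =
   l.+1 * 'C(l, x) * 'C(k, y) * (l.+1 - y))%N.
  by rewrite eF; ring.
have -> : ('C(k, x) * 'C(l.+1, y) * ((l.+1 - x) * (l.+1 - y)) =
   'C(k, x) * (l.+1 * 'C(l, y)) * (l.+1 - x))%N.
  by rewrite eE; ring.
apply: (@leq_trans (l.+1 * 'C(l, x) * 'C(k, y) * (l.+1 - x))).
  by rewrite leq_mul2l leq_sub2l // orbT.
have -> : ('C(k, x) * (l.+1 * 'C(l, y)) * (l.+1 - x) =
   l.+1 * ('C(k, x) * 'C(l, y)) * (l.+1 - x))%N by ring.
rewrite leq_mul2r; apply/orP; right.
rewrite -!mulnA leq_mul2l; apply/orP; right. by [].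
Qed.

Lemma ring_aux1 (R : comNzRingType) (al be c1 c2 p1 p2 : R) :
  al * (c1 * p1 * (be * p2)) + c2 * (al * p1) * p2 * be =
  (c2 + c1) * (al * p1) * (be * p2).
Proof. ring. Qed.
Lemma ring_aux2 (R : comNzRingType) (al c1 p1 p2 : R) :
  al * (c1 * p1 * p2) = c1 * (al * p1) * p2.
Proof. ring. Qed.

Lemma coef_qpow (R : comNzRingType) (al be : R) k i :
  ((al%:P * 'X + be%:P) ^+ k)`_i = 'C(k,i)%:R * al ^+ i * be ^+ (k - i).
Proof.
elim: k i => [|k IH] i.
  rewrite expr0 coef1 bin0n sub0n expr0 mulr1.
  by case: i => [|i]; rewrite ?expr0 ?mulr1 ?mul0r.
rewrite exprSr mulrDr coefD mulrA (mulrC _ al%:P) coefMX coefCM coefMC.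
case: i => [|m] /=.
  by rewrite add0r IH !bin0 !expr0 !subn0 !mulr1 !mul1r exprSr.
rewrite !IH binS natrD subSS.
case: (ltnP m k) => mk.
  rewrite -(subnSK mk) !exprS.
  move: ('C(k, m)%:R) ('C(k, m.+1)%:R) (al ^+ m) (be ^+ (k - m.+1)) => c1 c2 p1 p2.
  exact: ring_aux1.
rewrite (@bin_small k m.+1) ?ltnS // mul0r !mul0r addr0.
by rewrite add0r exprS ring_aux2.
Qed.


Lemma prod_split (T : comNzRingType) n k (q h : T) : (k <= n)%N ->
  \prod_(i < n) (if (i < k)%N then q else h) = q ^+ k * h ^+ (n - k).
Proof.
move=> kn.
rewrite -(big_mkord xpredT (fun i => if (i < k)%N then q else h)).
rewrite (@big_cat_nat _ _ _ k 0 n) //=.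
rewrite (@eq_big_nat _ _ _ 0 k _ (fun=> q)); last by move=> i /andP [_ ->].
rewrite (@eq_big_nat _ _ _ k n _ (fun=> h)); last first.
  by move=> i /andP [ki _]; rewrite ltnNge ki.
by rewrite !prodr_const_nat subn0.
Qed.

Section Aux.
Variables (R : realFieldType) (n : nat).

Lemma sum_prod_ffun (G : 'I_n -> bool -> R) :
  \sum_(ys : traj n) \prod_(m < n) G m (ys m) = \prod_(m < n) (G m true + G m false).
Proof.
transitivity (\prod_(m < n) \sum_(b : bool) G m b).
  by rewrite bigA_distr_bigA.
by apply: eq_bigr => m _; rewrite big_bool.
Qed.

Lemma prod_pick (i : 'I_n) (F : 'I_n -> R) :
  \prod_(m < n) (if m == i then F m else 1) = F i.
Proof. by rewrite -big_mkcond big_pred1_eq. Qed.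

Lemma sum_sgn2 (i j : 'I_n) :
  \sum_(ys : traj n) sgn R (ys i) * sgn R (ys j) = (i == j)%:R * 2 ^+ n.
Proof.
transitivity (\sum_(ys : traj n) \prod_(m < n)
   ((if m == i then sgn R (ys m) else 1) * (if m == j then sgn R (ys m) else 1))).
  by apply: eq_bigr => ys _; rewrite big_split /= !prod_pick.
rewrite (sum_prod_ffun (fun m b => (if m == i then sgn R b else 1) *
   (if m == j then sgn R b else 1))).
case: eqP => [<-|/eqP ij].
  rewrite mul1r -[in RHS](card_ord n) -prodr_const.
  by apply: eq_bigr => m _; case: (m == i); rewrite /sgn ?mulr1 ?mulrNN ?mul1r.
rewrite mul0r (bigD1 i) //= eqxx (negbTE ij) /sgn !mulr1 subrr mul0r //.
Qed.

Lemma sum_sgn1 (i : 'I_n) :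
  \sum_(ys : traj n) sgn R (ys i) = 0.
Proof.
transitivity (\sum_(ys : traj n) \prod_(m < n)
   (if m == i then sgn R (ys m) else 1)).
  by apply: eq_bigr => ys _; rewrite prod_pick.
rewrite (sum_prod_ffun (fun m b => if m == i then sgn R b else 1)).
by rewrite (bigD1 i) //= eqxx /sgn subrr mul0r.
Qed.

Definition Kz (z : traj n) : nat := (\sum_(i < n) z i)%N.

Lemma Kz_le z : (Kz z <= n)%N.
Proof.
rewrite /Kz -[X in (_ <= X)%N](card_ord n) -sum1_card.
by apply: leq_sum => i _; case: (z i).
Qed.

Lemma sum_cnt k (c : R) : (k <= n)%N -> \sum_(i < n | (i < k)%N) c = k%:R * c.
Proof.
move=> kn; rewrite -(big_ord_widen _ (fun _ => c) kn) sumr_const card_ord.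
by rewrite mulr_natl.
Qed.

Lemma sum_ys_SY z xs : \sum_(ys : traj n) SY R (z, xs, ys) = 0.
Proof.
rewrite /SY /= exchange_big /=.
by apply: big1 => i _; rewrite sum_sgn1.
Qed.

Lemma sum_ys_SY2 z xs : \sum_(ys : traj n) SY R (z, xs, ys) ^+ 2 = (Kz z)%:R * 2 ^+ n.
Proof.
rewrite /SY /=.
transitivity (\sum_(ys : traj n) \sum_(i < n | (i < Kz z)%N) \sum_(j < n | (j < Kz z)%N)
   sgn R (ys i) * sgn R (ys j)).
  apply: eq_bigr => ys _; rewrite expr2 mulr_suml; apply: eq_bigr => i _.
  by rewrite mulr_sumr.
rewrite exchange_big /=.
transitivity (\sum_(i < n | (i < Kz z)%N) (2 ^+ n : R)); last by rewrite sum_cnt // Kz_le.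
apply: eq_bigr => i Hi; rewrite exchange_big /=.
rewrite (bigD1 i) //= sum_sgn2 eqxx mul1r big1 ?addr0 // => j /andP [_ ji].
by rewrite sum_sgn2 eq_sym (negbTE ji) mul0r.
Qed.

Definition cnt (k : nat) (xs : traj n) : nat := (\sum_(i < n | (i < k)%N) xs i)%N.

Lemma SX_eq z xs ys : SX R (z, xs, ys) = 2 * (cnt (Kz z) xs)%:R.
Proof.
rewrite /SX /cnt /= natr_sum mulr_sumr; apply: eq_bigr => i _.
by case: (xs i); rewrite /sgn /= ?mulr1 ?mulr0 // addNr.
Qed.

Lemma SXev x z xs ys : SX_event R x (z, xs, ys) = (cnt (Kz z) xs == x).
Proof.
rewrite /SX_event SX_eq (inj_eq (mulfI _)) ?eqr_nat //.
by rewrite pnatr_eq0.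
Qed.

Lemma sum_omega (H : omega n -> R) :
  \sum_w H w = \sum_(z : traj n) \sum_(xs : traj n) \sum_(ys : traj n) H (z, xs, ys).
Proof.
symmetry; rewrite pair_bigA /= pair_bigA /=.
by apply: eq_bigr => -[[z xs] ys] _.
Qed.

End Aux.

Section Main.
Variables (R : realFieldType) (n : nat) (lamF lamA a b alpha beta : R).

Definition PS (xs : traj n) : R := \prod_(i < n) (if xs i then alpha else beta).
Definition cw (z : traj n) : R := chain_weight lamF lamA a b z.
Definition Qf k x : R := \sum_(xs : traj n) (if cnt k xs == x then PS xs else 0).
Notation W := (weight lamF lamA a b alpha beta).

Lemma decomp x (g : omega n -> R) :
  \sum_(w | @SX_event R n x w) W w * g w =
  \sum_(z : traj n) \sum_(xs : traj n)
     (if cnt (Kz z) xs == x then cw z * PS xs * \sum_(ys : traj n) g (z, xs, ys) else 0).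
Proof.
rewrite big_mkcond sum_omega; apply: eq_bigr => z _; apply: eq_big => // xs _.
under eq_bigr => ys _ do rewrite SXev.
case: (cnt (Kz z) xs == x); last by rewrite big1.
by rewrite mulr_sumr.
Qed.

Lemma card_traj : #|{: traj n}| = (2 ^ n)%N.
Proof. by rewrite card_ffun card_bool card_ord. Qed.

Lemma prob_eq x : Prob lamF lamA a b alpha beta (@SX_event R n x) =
  2 ^+ n * \sum_(z : traj n) cw z * Qf (Kz z) x.
Proof.
rewrite /Prob.
under eq_bigr => w _ do rewrite -[W w]mulr1.
rewrite decomp mulr_sumr; apply: eq_bigr => z _.
rewrite /Qf !mulr_sumr; apply: eq_big => // xs _.
rewrite sumr_const card_traj -natrX.
case: (_ == _); last by rewrite !mulr0.
by rewrite mulrC.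
Qed.

Lemma num1_eq x : \sum_(w | @SX_event R n x w) W w * SY R w = 0.
Proof.
rewrite decomp big1 // => z _; rewrite big1 // => xs _.
by rewrite sum_ys_SY mulr0; case: (_ == _).
Qed.

Lemma num2_eq x : \sum_(w | @SX_event R n x w) W w * (SY R w - 0) ^+ 2 =
  2 ^+ n * \sum_(z : traj n) cw z * (Kz z)%:R * Qf (Kz z) x.
Proof.
under eq_bigr => w _ do rewrite subr0.
rewrite decomp mulr_sumr; apply: eq_bigr => z _.
rewrite /Qf !mulr_sumr; apply: eq_big => // xs _.
rewrite sum_ys_SY2.
case: (_ == _); last by rewrite !mulr0.
move: (cw z) (PS xs) ((Kz z)%:R) (2 ^+ n : R) => p q r s; ring.
Qed.

Lemma condVar_eq x : condVar lamF lamA a b alpha beta (@SY R n) (@SX_event R n x) =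
  (\sum_(z : traj n) cw z * (Kz z)%:R * Qf (Kz z) x) /
  (\sum_(z : traj n) cw z * Qf (Kz z) x).
Proof.
rewrite /condVar /condE num1_eq mul0r num2_eq prob_eq.
rewrite -mulf_div divff ?mul1r //.
by rewrite expf_neq0 // pnatr_eq0.
Qed.


Lemma Qf_closed k x : (k <= n)%N ->
  Qf k x = 'C(k, x)%:R * alpha ^+ x * beta ^+ (k - x) * (alpha + beta) ^+ (n - k).
Proof.
move=> kn.
pose q : {poly R} := alpha%:P * 'X + beta%:P.
transitivity ((\sum_(xs : traj n) (PS xs)%:P * 'X^(cnt k xs))`_x).
  rewrite /Qf coef_sum; apply: eq_big => // xs _.
  by rewrite coefCM coefXn eq_sym; case: (_ == _); rewrite ?mulr1 ?mulr0.
transitivity ((\sum_(xs : traj n) \prod_(i < n)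
   ((if xs i then alpha else beta)%:P * 'X^(if (i < k)%N then nat_of_bool (xs i) else 0%N)))`_x).
  apply: (f_equal (fun p : {poly R} => p`_x)); apply: eq_bigr => xs _.
  rewrite big_split /= -rmorph_prod prodrXr /cnt big_mkcond /=.
  by [].
transitivity ((\prod_(i < n) \sum_(bb : bool)
   ((if bb then alpha else beta)%:P * 'X^(if (i < k)%N then nat_of_bool bb else 0%N)))`_x).
  by rewrite bigA_distr_bigA.
transitivity ((\prod_(i < n) (if (i < k)%N then q else (alpha + beta)%:P))`_x).
  apply: (f_equal (fun p : {poly R} => p`_x)); apply: eq_bigr => i _; rewrite big_bool /=.
  case: (i < k)%N; rewrite /q ?expr0 ?expr1 ?mulr1 //.
  by rewrite polyCD.
rewrite prod_split // -rmorphXn coefMC coef_qpow.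
by [].
Qed.

Hypotheses (ha : 0 <= alpha) (hb : 0 <= beta).

Lemma TP2R k l x y : (x <= y)%N -> (k <= l)%N -> (l <= n)%N ->
  Qf l x * Qf k y <= Qf k x * Qf l y.
Proof.
move=> xy kl ln; have kn := leq_trans kl ln.
rewrite !Qf_closed //.
have hh : 0 <= alpha + beta by rewrite addr_ge0.
case: (ltnP k y) => yk.
  rewrite (@bin_small k y) // mul0r !mul0r mulr0.
  by rewrite !mulr_ge0 ?exprn_ge0 ?ler0n.
have e : (l - x + (k - y) = k - x + (l - y))%N.
  have xk := leq_trans xy yk; have yl := leq_trans yk kl; lia.
have eb : beta ^+ (l - x) * beta ^+ (k - y) = beta ^+ (k - x) * beta ^+ (l - y).
  by rewrite -!exprD e.
set h := alpha + beta.
have -> : 'C(l, x)%:R * alpha ^+ x * beta ^+ (l - x) * h ^+ (n - l) *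
    ('C(k, y)%:R * alpha ^+ y * beta ^+ (k - y) * h ^+ (n - k)) =
    ('C(l, x) * 'C(k, y))%:R * (alpha ^+ x * alpha ^+ y *
      (beta ^+ (l - x) * beta ^+ (k - y)) * (h ^+ (n - l) * h ^+ (n - k))).
  by rewrite natrM; ring.
have -> : 'C(k, x)%:R * alpha ^+ x * beta ^+ (k - x) * h ^+ (n - k) *
    ('C(l, y)%:R * alpha ^+ y * beta ^+ (l - y) * h ^+ (n - l)) =
    ('C(k, x) * 'C(l, y))%:R * (alpha ^+ x * alpha ^+ y *
      (beta ^+ (k - x) * beta ^+ (l - y)) * (h ^+ (n - l) * h ^+ (n - k))).
  by rewrite natrM; ring.
rewrite eb ler_wpM2r ?ler_nat ?binTP2 //.
by rewrite !mulr_ge0 ?exprn_ge0.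
Qed.

Lemma term_ge0 k l x y : (x <= y)%N -> (k <= n)%N -> (l <= n)%N ->
  0 <= ((l%:R : R) - k%:R) * (Qf k x * Qf l y - Qf l x * Qf k y).
Proof.
move=> xy kn ln; case: (leqP k l) => kl.
  by rewrite mulr_ge0 // subr_ge0 ?ler_nat // TP2R.
rewrite -mulrNN !opprB mulr_ge0 // subr_ge0 ?ler_nat ?(ltnW kl) //.
by rewrite TP2R // ltnW.
Qed.

Lemma cw_ge0 z : 0 <= lamF -> 0 <= lamA -> 0 <= a <= 1 -> 0 <= b <= 1 -> 0 <= cw z.
Proof.
move=> hF hA /andP [a0 a1] /andP [b0 b1].
rewrite /cw /chain_weight mulr_ge0 //.
  by rewrite /init_law; case: ifP.
apply: prodr_ge0 => i _; rewrite /trans.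
by case: (at_time z i); case: (at_time z i.+1); rewrite // subr_ge0.
Qed.

Lemma key x y : 0 <= lamF -> 0 <= lamA -> 0 <= a <= 1 -> 0 <= b <= 1 -> (x <= y)%N ->
  (\sum_(z : traj n) cw z * (Kz z)%:R * Qf (Kz z) x) * (\sum_(z : traj n) cw z * Qf (Kz z) y) <=
  (\sum_(z : traj n) cw z * (Kz z)%:R * Qf (Kz z) y) * (\sum_(z : traj n) cw z * Qf (Kz z) x).
Proof.
move=> hF hA ha1 hb1 xy.
pose F z z' := cw z * cw z' * (Qf (Kz z) x * Qf (Kz z') y).
have e1 : (\sum_(z : traj n) cw z * (Kz z)%:R * Qf (Kz z) x) * (\sum_(z : traj n) cw z * Qf (Kz z) y)
   = \sum_(z : traj n) \sum_(z' : traj n) (Kz z)%:R * F z z'.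
  rewrite mulr_suml; apply: eq_bigr => z _; rewrite mulr_sumr; apply: eq_bigr => z' _.
  rewrite /F; move: (cw z) (cw z') ((Kz z)%:R : R) (Qf (Kz z) x) (Qf (Kz z') y) => p1 p2 p3 p4 p5.
  ring.
have e2 : (\sum_(z : traj n) cw z * (Kz z)%:R * Qf (Kz z) y) * (\sum_(z : traj n) cw z * Qf (Kz z) x)
   = \sum_(z : traj n) \sum_(z' : traj n) (Kz z')%:R * F z z'.
  rewrite mulr_suml exchange_big; apply: eq_bigr => z' _; rewrite mulr_sumr; apply: eq_bigr => z _.
  rewrite /F; move: (cw z) (cw z') ((Kz z')%:R : R) (Qf (Kz z) x) (Qf (Kz z') y) => p1 p2 p3 p4 p5.
  ring.
rewrite -subr_ge0 e1 e2 -sumrB.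
under eq_bigr => z _ do rewrite -sumrB.
set S := (X in 0 <= X).
have eS : S = \sum_(z : traj n) \sum_(z' : traj n) ((Kz z)%:R * F z' z - (Kz z')%:R * F z' z).
  by rewrite /S exchange_big.
suff : 0 <= S + S by lra.
rewrite {1}eS /S -big_split /=; apply: sumr_ge0 => z _.
rewrite -big_split /=; apply: sumr_ge0 => z' _.
have -> : (Kz z)%:R * F z' z - (Kz z')%:R * F z' z + ((Kz z')%:R * F z z' - (Kz z)%:R * F z z')
   = cw z * cw z' * (((Kz z')%:R - (Kz z)%:R) *
       (Qf (Kz z) x * Qf (Kz z') y - Qf (Kz z') x * Qf (Kz z) y)).
  rewrite /F; move: (cw z) (cw z') ((Kz z)%:R : R) ((Kz z')%:R : R)
     (Qf (Kz z) x) (Qf (Kz z') y) (Qf (Kz z') x) (Qf (Kz z) y) => p1 p2 p3 p4 p5 p6 p7 p8.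
  ring.
apply: mulr_ge0; first by apply: mulr_ge0; apply: cw_ge0.
by apply: term_ge0; rewrite // Kz_le.
Qed.

End Main.

Theorem proposition5 (R : realFieldType) (n : nat) (lamF lamA a b alpha beta : R) :
  (0 < n)%N ->
  0 <= lamF -> 0 <= lamA -> lamF + lamA = 1 ->
  0 <= a <= 1 -> 0 <= b <= 1 ->
  0 <= alpha -> 0 <= beta -> alpha + beta = 2^-1 ->
  forall x y : nat, (x <= y <= n)%N ->
  0 < @Prob R n lamF lamA a b alpha beta (@SX_event R n x) ->
  0 < @Prob R n lamF lamA a b alpha beta (@SX_event R n y) ->
  @condVar R n lamF lamA a b alpha beta (@SY R n) (@SX_event R n x)
  <= @condVar R n lamF lamA a b alpha beta (@SY R n) (@SX_event R n y).
Proof.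
move=> n0 hF hA hs ha1 hb1 ha hb hab x y /andP [xy yn] Px Py.
rewrite !condVar_eq.
have t0 : (0 : R) < 2 ^+ n by rewrite exprn_gt0 // ltr0n.
rewrite prob_eq pmulr_rgt0 // in Px.
rewrite prob_eq pmulr_rgt0 // in Py.
rewrite ler_pdivrMr // mulrAC ler_pdivlMr //.
exact: key.
Qed.
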